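(* Every boolean UCQ can be compactly provisioned (exactly) using sketches of size $O(k^b)$ bits, where $b$ is the maximum size (number of body atoms) of a conjunctive query in the UCQ and $k$ is the number of hypotheticals.
   Context: A conjunctive query (CQ) is a rule $\mathit{ans}(\bar x)\,{:\!-}\,R_1(\bar x_1),\dots,R_b(\bar x_b)$; its size is the number $b$ of body atoms. A UCQ is a finite union of CQs whose heads have the same schema; it is boolean if its head has no variables (it returns true/false). The query is fixed (constant size). A hypothetical $h$ maps each instance $I$ to a sub-instance $h(I)\subseteq I$; for hypotheticals $h_1,\dots,h_k$ and nonempty scenario $S\subseteq[k]$, $I[S]=\bigcup_{i\in S}h_i(I)$. A provisioning scheme: a compression algorithm mapping $(I,h_1,\dots,h_k)$ to a sketch $\Gamma$, and an extraction algorithm that, for any scenario $S$ and using only $\Gamma$ (no access to $I$), outputs $Q(I[S])$. *)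

(* Defs.v *)
From mathcomp Require Import all_boot.
Set Implicit Arguments. Unset Strict Implicit. Unset Printing Implicit Defensive.

(* Constants of the (infinite) domain and query variables are both nat.
   Relation symbols are named by nat. *)
Definition const := nat.
Definition var := nat.

Definition fact := (nat * seq const)%type.
(* An instance is a finite set of facts (represented by a list). *)
Definition instance := seq fact.

Definition atom := (nat * seq var)%type.
Definition bcq := seq atom.
Definition bucq := seq bcq.

Definition cq_size (q : bcq) : nat := size q.
Definition ucq_maxsize (Q : bucq) : nat := \max_(q <- Q) cq_size q.

Definition cq_holds (q : bcq) (I : instance) : Prop :=
  exists v : var -> const, forall a, a \in q -> (a.1, map v a.2) \in I.

Definition ucq_holds (Q : bucq) (I : instance) : Prop :=
  exists2 q, q \in Q & cq_holds q I.

Definition hypothetical (h : instance -> instance) : Prop :=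
  forall J : instance, {subset h J <= J}.

Definition scenario_inst (k : nat) (I : instance)
  (h : 'I_k -> instance -> instance) (S : {set 'I_k}) : instance :=
  flatten [seq h i I | i <- enum S].

Definition compressor := forall k : nat, instance -> ('I_k -> instance -> instance) -> seq bool.
Definition extractor := forall k : nat, seq bool -> {set 'I_k} -> bool.

Definition provisions (Q : bucq) (comp : compressor) (extr : extractor) : Prop :=
  forall (k : nat) (I : instance) (h : 'I_k -> instance -> instance),
    (forall i, hypothetical (h i)) ->
    forall S : {set 'I_k}, S != set0 ->
      (extr k (comp k I h) S <-> ucq_holds Q (scenario_inst I h S)).

Definition sketch_size_bigO (comp : compressor) (f : nat -> nat) : Prop :=
  exists C N : nat, forall (k : nat) (I : instance) (h : 'I_k -> instance -> instance),
    (forall i, hypothetical (h i)) -> N <= k -> size (comp k I h) <= C * f k.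

(* Main.v *)
Require Import Defs.
From mathcomp Require Import all_boot.
From Stdlib Require Import ClassicalEpsilon.
Set Implicit Arguments. Unset Strict Implicit.

Definition decb (P : Prop) : bool :=
  if excluded_middle_informative P then true else false.

Lemma decbP (P : Prop) : decb P <-> P.
Proof. rewrite /decb; case: excluded_middle_informative => //. Qed.

Lemma scen_mono k I (h : 'I_k -> instance -> instance) (T S : {set 'I_k}) x :
  T \subset S -> x \in scenario_inst I h T -> x \in scenario_inst I h S.
Proof.
move=> TS /flatten_mapP [i iT xi]; apply/flatten_mapP; exists i => //.
by rewrite mem_enum (subsetP TS) // -mem_enum.
Qed.

Lemma ucq_mono Q k I (h : 'I_k -> instance -> instance) (T S : {set 'I_k}) :
  T \subset S -> ucq_holds Q (scenario_inst I h T) -> ucq_holds Q (scenario_inst I h S).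
Proof.
move=> TS [q qQ [v Hv]]; exists q => //; exists v => a aq.
exact: scen_mono TS (Hv a aq).
Qed.

Section Scheme.
Variable Q : bucq.
Let b := ucq_maxsize Q.

Definition tset k (t : {ffun 'I_b -> 'I_k}) : {set 'I_k} := [set t j | j : 'I_b].

Definition comp0 : compressor := fun k I h =>
  [seq decb (ucq_holds Q (scenario_inst I h (tset t))) | t <- enum {ffun 'I_b -> 'I_k}].

Definition extr0 : extractor := fun k s S =>
  [exists t : {ffun 'I_b -> 'I_k}, (tset t \subset S) && nth false s (enum_rank t)].

Lemma comp0_nth k I h (t : {ffun 'I_b -> 'I_k}) :
  nth false (comp0 I h) (enum_rank t) = decb (ucq_holds Q (scenario_inst I h (tset t))).
Proof.
rewrite /comp0 (nth_map t); last by rewrite -cardE ltn_ord.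
by rewrite nth_enum_rank.
Qed.

Lemma scheme_ok : provisions Q comp0 extr0.
Proof.
move=> k I h hyp S SN; split.
  case/existsP=> t /andP [tS]; rewrite comp0_nth => /decbP.
  exact: ucq_mono.
move=> [q qQ [v Hv]].
case/set0Pn: SN => i0 i0S.
pose f (a : atom) : fact := (a.1, map v a.2).
pose g (j : nat) : 'I_k :=
  odflt i0 [pick i in S | f (nth (0, [::]) q j) \in h i I].
pose t := [ffun j : 'I_b => g j].
have gS j : g j \in S.
  by rewrite /g; case: pickP => [x /andP [] | _].
apply/existsP; exists t; apply/andP; split.
  by apply/subsetP => x /imsetP [j _ ->]; rewrite ffunE gS.
rewrite comp0_nth; apply/decbP; exists q => //; exists v => a aq.
have qb : size q <= b.
  by rewrite /b /ucq_maxsize; apply: (@leq_bigmax_seq _ Q predT cq_size q qQ).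
have jb : index a q < b by apply: leq_trans qb; rewrite index_mem.
have [i iS ai] : exists2 i, i \in S & f a \in h i I.
  by case/flatten_mapP: (Hv a aq) => i; rewrite mem_enum => iS ai; exists i.
have Hpick : f (nth (0, [::]) q (index a q)) \in h (g (index a q)) I.
  rewrite /g nth_index //; case: pickP => [x /andP [] // | /(_ i)].
  by rewrite iS ai.
apply/flatten_mapP; exists (g (index a q)).
  rewrite mem_enum; apply/imsetP; exists (Ordinal jb) => //.
  by rewrite ffunE.
by move: Hpick; rewrite nth_index.
Qed.

Lemma scheme_size : sketch_size_bigO comp0 (fun k => k ^ b).
Proof.
exists 1, 0 => k I h _ _.
by rewrite mul1n size_map -cardE card_ffun !card_ord.
Qed.
End Scheme.

Theorem mainTheorem12 (Q : bucq) :
  exists (comp : compressor) (extr : extractor),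
    provisions Q comp extr /\
    sketch_size_bigO comp (fun k => k ^ ucq_maxsize Q).
Proof.
exists (comp0 Q), (extr0 Q); split; [exact: scheme_ok | exact: scheme_size].
Qed.
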